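(* Let $\lambda\in\mathbf{k}$, let $V$ be a $\mathbf{k}$-module and $d_0:V\to V$ a linear map. Then $(T^+(V),\prec_V,\succ_V,d_V)$, together with the natural embedding $j_V:V=V^{\otimes1}\hookrightarrow T^+(V)$, is the free commutative differential dendriform algebra of weight $\lambda$ on $(V,d_0)$: it is a commutative differential dendriform algebra of weight $\lambda$, and for every commutative differential dendriform algebra $(D,\prec_D,\succ_D,d_D)$ of weight $\lambda$ and every linear map $\psi:V\to D$ with $d_D\psi=\psi d_0$, there is a unique linear map $\bar\psi:T^+(V)\to D$ preserving $\prec$ and $\succ$, satisfying $d_D\bar\psi=\bar\psi d_V$ and $\bar\psi j_V=\psi$.
   Context: $\mathbf{k}$ is a commutative unital ring. $T(V)=\bigoplus_{k\ge0}V^{\otimes k}$ (with $V^{\otimes0}=\mathbf{k}$, unit $\mathbf 1$ the empty tensor), $T^+(V)=\bigoplus_{k\ge1}V^{\otimes k}$. The shuffle product $\ast_0$ on $T(V)$ is defined recursively by $\mathbf 1\ast_0\mathfrak a=\mathfrak a\ast_0\mathbf 1=\mathfrak a$ and, for pure tensors $\mathfrak a=a_1\otimes\mathfrak a'$, $\mathfrak b=b_1\otimes\mathfrak b'$ ($a_1,b_1\in V$), $\mathfrak a\ast_0\mathfrak b=a_1\otimes(\mathfrak a'\ast_0\mathfrak b)+b_1\otimes(\mathfrak a\ast_0\mathfrak b')$. On $T^+(V)$: $\mathfrak a\prec_V\mathfrak b:=a_1\otimes(\mathfrak a'\ast_0\mathfrak b)$, $\mathfrak a\succ_V\mathfrak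 b:=b_1\otimes(\mathfrak a\ast_0\mathfrak b')$. The linear map $d_V:T^+(V)\to T^+(V)$ is $d_V(a_1\otimes\cdots\otimes a_m)=\sum_{\emptyset\ne S\subseteq\{1,\dots,m\}}\lambda^{|S|-1}c^S_1\otimes\cdots\otimes c^S_m$ with $c^S_i=d_0(a_i)$ for $i\in S$ and $c^S_i=a_i$ otherwise. A dendriform algebra is a $\mathbf{k}$-module $D$ with bilinear operations $\prec,\succ$ such that for all $a,b,c\in D$: $(a\prec b)\prec c=a\prec(b\prec c+b\succ c)$, $(a\succ b)\prec c=a\succ(b\prec c)$, $(a\prec b+a\succ b)\succ c=a\succ(b\succ c)$. It is commutative if $a\succ b=b\prec a$ for all $a,b$. A derivation of weight $\lambda$ on it is a linear map $d$ with $d(a\prec b)=d(a)\prec b+a\prec d(b)+\lambda d(a)\prec d(b)$ and $d(a\succ b)=d(a)\succ b+a\succ d(b)+\lambda d(a)\succ d(b)$ for all $a,b$; then $(D,\prec,\succ,d)$ is a differential dendriform algebra of weight $\lambda$, called commutative if $(D,\prec,\succ)$ is commutative. *)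

(* Defs.v *)
From HB Require Import structures.
From mathcomp Require Import all_boot all_algebra.
From Stdlib Require Import ClassicalEpsilon.

Set Implicit Arguments.
Unset Strict Implicit.
Unset Printing Implicit Defensive.

Import GRing.Theory.
Local Open Scope ring_scope.
Local Open Scope quotient_scope.

Section Dendriform.
Variable (k : comPzRingType) (D : lmodType k).

Definition klinear (W1 W2 : lmodType k) (f : W1 -> W2) : Prop := linear f.

Definition kbilinear (op : D -> D -> D) : Prop :=
  (forall a, klinear (op a)) /\ (forall b, klinear (fun a => op a b)).

Definition dendriform (prec succ : D -> D -> D) : Prop :=
  [/\ kbilinear prec, kbilinear succ,
      (forall a b c, prec (prec a b) c = prec a (prec b c + succ b c)),
      (forall a b c, prec (succ a b) c = succ a (prec b c)) &
      (forall a b c, succ (prec a b + succ a b) c = succ a (succ b c))].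

Definition comm_dendriform (prec succ : D -> D -> D) : Prop :=
  dendriform prec succ /\ forall a b, succ a b = prec b a.

Definition dend_derivation (lambda : k) (prec succ : D -> D -> D) (d : D -> D) :=
  [/\ klinear d,
      (forall a b, d (prec a b) = prec (d a) b + prec a (d b) + lambda *: prec (d a) (d b)) &
      (forall a b, d (succ a b) = succ (d a) b + succ a (d b) + lambda *: succ (d a) (d b))].

Definition comm_diff_dendriform (lambda : k) (prec succ : D -> D -> D) (d : D -> D) :=
  comm_dendriform prec succ /\ dend_derivation lambda prec succ d.

End Dendriform.

(* The k-module T^+(V) = (+)_{m >= 1} V^{(x) m}.                              *)
(* Representatives: finite formal k-linear combinations of words             *)
(*   e = [:: (c_1, w_1); ...; (c_n, w_n)]  standing for  sum_i c_i w_i,       *)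
(* where a word w = [:: a_1; ...; a_m] stands for a_1 (x) ... (x) a_m.        *)
(* Two representatives are identified iff they have the same image under     *)
(* every map on words that is k-multilinear in each letter and kills the     *)
(* empty word (universal property of the tensor powers; the empty word is    *)
(* killed since we are in T^+(V), not T(V)).                                 *)
Section TensorPlus.
Variables (k : comPzRingType) (V : lmodType k).

Definition fsum := seq (k * seq V).

Definition multilin (W : lmodType k) (f : seq V -> W) : Prop :=
  f [::] = 0 /\
  forall (u w : seq V) (r : k) (a b : V),
    f (u ++ (r *: a + b) :: w) = r *: f (u ++ a :: w) + f (u ++ b :: w).

Definition fsum_eval (W : lmodType k) (f : seq V -> W) (e : fsum) : W :=
  \sum_(t <- e) t.1 *: f t.2.

Definition tequiv (e1 e2 : fsum) : Prop :=
  forall (W : lmodType k) (f : seq V -> W),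
    multilin f -> fsum_eval f e1 = fsum_eval f e2.

Definition tequivb (e1 e2 : fsum) : bool :=
  if excluded_middle_informative (tequiv e1 e2) then true else false.

Lemma tequivbP e1 e2 : reflect (tequiv e1 e2) (tequivb e1 e2).
Proof.
rewrite /tequivb; case: excluded_middle_informative => H; constructor => //.
Qed.

Lemma tequivb_is_equiv : equiv_class_of tequivb.
Proof.
split.
- by move=> x; apply/tequivbP.
- move=> x y; apply/idP/idP => /tequivbP H; apply/tequivbP => W f Hf;
  by rewrite H.
- move=> y x z /tequivbP H1 /tequivbP H2; apply/tequivbP => W f Hf.
  by rewrite H1 ?H2.
Qed.

Canonical tequivb_equiv := EquivRelPack tequivb_is_equiv.
Canonical tequivb_encModRel := defaultEncModRel tequivb.

Definition Tplus := {eq_quot tequivb}.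
HB.instance Definition _ : EqQuotient fsum tequivb Tplus := EqQuotient.on Tplus.
HB.instance Definition _ := Choice.on Tplus.

Lemma fsum_eval_cat (W : lmodType k) (f : seq V -> W) e1 e2 :
  fsum_eval f (e1 ++ e2) = fsum_eval f e1 + fsum_eval f e2.
Proof. by rewrite /fsum_eval big_cat. Qed.

Definition fscale (c : k) (e : fsum) : fsum := [seq (c * t.1, t.2) | t <- e].

Lemma fsum_eval_scale (W : lmodType k) (f : seq V -> W) c e :
  fsum_eval f (fscale c e) = c *: fsum_eval f e.
Proof.
rewrite /fsum_eval big_map scaler_sumr; apply: eq_bigr => t _ /=.
by rewrite scalerA.
Qed.

Lemma tequiv_repr (e : fsum) : tequiv (repr (\pi_Tplus e)) e.
Proof. by apply/tequivbP; rewrite -eqmodE reprK. Qed.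

Lemma fsum_eval_repr (W : lmodType k) (f : seq V -> W) e :
  multilin f -> fsum_eval f (repr (\pi_Tplus e)) = fsum_eval f e.
Proof. by move=> Hf; apply: tequiv_repr. Qed.

Lemma pi_tequiv (e1 e2 : fsum) : tequiv e1 e2 -> \pi_Tplus e1 = \pi_Tplus e2.
Proof. by move=> H; apply/eqmodP/tequivbP. Qed.

Definition tzero : Tplus := \pi_Tplus [::].
Definition tadd (x y : Tplus) : Tplus := \pi_Tplus (repr x ++ repr y).
Definition tscale (c : k) (x : Tplus) : Tplus := \pi_Tplus (fscale c (repr x)).
Definition topp (x : Tplus) : Tplus := tscale (-1) x.

Lemma tequiv_cat e1 e2 e1' e2' :
  tequiv e1 e1' -> tequiv e2 e2' -> tequiv (e1 ++ e2) (e1' ++ e2').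
Proof. by move=> H1 H2 W f Hf; rewrite !fsum_eval_cat H1 ?H2. Qed.

Lemma tequiv_scale c e e' : tequiv e e' -> tequiv (fscale c e) (fscale c e').
Proof. by move=> H W f Hf; rewrite !fsum_eval_scale H. Qed.

Lemma tadd_pi e1 e2 : tadd (\pi_Tplus e1) (\pi_Tplus e2) = \pi_Tplus (e1 ++ e2).
Proof. by apply: pi_tequiv; apply: tequiv_cat; apply: tequiv_repr. Qed.

Lemma tscale_pi c e : tscale c (\pi_Tplus e) = \pi_Tplus (fscale c e).
Proof. by apply: pi_tequiv; apply: tequiv_scale; apply: tequiv_repr. Qed.

Lemma taddA : associative tadd.
Proof.
move=> x y z; elim/quotW: x => x; elim/quotW: y => y; elim/quotW: z => z.
rewrite !tadd_pi; apply: pi_tequiv => W f Hf.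
by rewrite !fsum_eval_cat !fsum_eval_repr // addrA.
Qed.

Lemma taddC : commutative tadd.
Proof.
move=> x y; elim/quotW: x => x; elim/quotW: y => y; rewrite !tadd_pi; apply: pi_tequiv => W f Hf.
by rewrite !fsum_eval_cat addrC.
Qed.

Lemma tadd0 : left_id tzero tadd.
Proof. by move=> x; elim/quotW: x => x; rewrite /tzero tadd_pi. Qed.

Lemma taddN : left_inverse tzero topp tadd.
Proof.
move=> x; elim/quotW: x => x; rewrite /topp tscale_pi tadd_pi; apply: pi_tequiv => W f Hf.
rewrite fsum_eval_cat fsum_eval_scale scaleN1r addNr.
by rewrite /fsum_eval big_nil.
Qed.

HB.instance Definition _ := GRing.isZmodule.Build Tplus taddA taddC tadd0 taddN.

Lemma taddE (x y : Tplus) : x + y = tadd x y. Proof. by []. Qed.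

Ltac tsolve := apply: pi_tequiv => W f Hf;
  rewrite ?(fsum_eval_scale, fsum_eval_cat, fsum_eval_repr) //.

Lemma tscaleA a b (v : Tplus) : tscale a (tscale b v) = tscale (a * b) v.
Proof.
elim/quotW: v => v; rewrite !tscale_pi; tsolve.
by rewrite scalerA.
Qed.

Lemma tscale1 : left_id 1 tscale.
Proof.
move=> v; elim/quotW: v => v; rewrite !tscale_pi; tsolve.
by rewrite scale1r.
Qed.

Lemma tscaleDr : right_distributive tscale +%R.
Proof.
move=> a x y; elim/quotW: x => x; elim/quotW: y => y; rewrite !taddE.
rewrite !tadd_pi !tscale_pi; tsolve.
by rewrite scalerDr.
Qed.

Lemma tscaleDl (v : Tplus) : {morph tscale^~ v : a b / a + b}.
Proof.
move=> a b; elim/quotW: v => v; rewrite taddE !tscale_pi tadd_pi; tsolve.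
by rewrite scalerDl.
Qed.

HB.instance Definition _ :=
  GRing.Zmodule_isLmodule.Build k Tplus tscaleA tscale1 tscaleDr tscaleDl.

End TensorPlus.

Section TensorOps.
Variables (k : comPzRingType) (V : lmodType k).

(* [shuffle s t] lists (with multiplicity) the words of s *_0 t:
   1 *_0 t = t,  s *_0 1 = s,
   (a::s') *_0 (b::t') = a::(s' *_0 (b::t')) + b::((a::s') *_0 t'). *)
Fixpoint shuffle (s t : seq V) {struct s} : seq (seq V) :=
  match s with
  | [::] => [:: t]
  | a :: s' =>
    let fix sh (t : seq V) : seq (seq V) :=
      match t with
      | [::] => [:: s]
      | b :: t' => map (cons a) (shuffle s' t) ++ map (cons b) (sh t')
      end in sh t
  end.

(* on nonempty words: (a_1::a') prec b = a_1 (x) (a' *_0 b);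
                      a succ (b_1::b') = b_1 (x) (a *_0 b').
   The empty word represents 0 in T^+(V), so it is sent to 0. *)
Definition word_prec (s t : seq V) : seq (seq V) :=
  if t is [::] then [::] else
  if s is a :: s' then map (cons a) (shuffle s' t) else [::].

Definition word_succ (s t : seq V) : seq (seq V) :=
  if s is [::] then [::] else
  if t is b :: t' then map (cons b) (shuffle s t') else [::].

Definition fbilin (op : seq V -> seq V -> seq (seq V)) (e1 e2 : fsum V) : fsum V :=
  flatten [seq [seq (t.1 * u.1, w) | w <- op t.2 u.2] | t <- e1, u <- e2].

Variables (lambda : k) (d0 : V -> V).

(* d_V(a_1 (x) ... (x) a_m) =
     sum_{X nonempty subset of {1..m}} lambda^(|X|-1) c^X_1 (x) ... (x) c^X_m,
   c^X_i = d0 a_i if i in X, a_i otherwise (indices are 0-based here). *)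
Definition dword (w : seq V) : fsum V :=
  [seq (lambda ^+ #|X|.-1,
        [seq (if i \in X then d0 (nth 0 w i) else nth 0 w i) | i : 'I_(size w)])
  | X : {set 'I_(size w)} <- enum [set X : {set 'I_(size w)} | X != set0]].

Definition fdiff (e : fsum V) : fsum V :=
  flatten [seq [seq (t.1 * u.1, u.2) | u <- dword t.2] | t <- e].

End TensorOps.

Section TplusOps.
Variables (k : comPzRingType) (V : lmodType k).

Definition precV (x y : Tplus V) : Tplus V :=
  \pi_(Tplus V) (fbilin (@word_prec k V) (repr x) (repr y)).

Definition succV (x y : Tplus V) : Tplus V :=
  \pi_(Tplus V) (fbilin (@word_succ k V) (repr x) (repr y)).

Definition dV (lambda : k) (d0 : V -> V) (x : Tplus V) : Tplus V :=
  \pi_(Tplus V) (fdiff lambda d0 (repr x)).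

Definition jV (v : V) : Tplus V := \pi_(Tplus V) [:: (1, [:: v])].

End TplusOps.

(* Main.v *)
Require Import Defs.
From HB Require Import structures.
From mathcomp Require Import all_boot all_algebra.
From mathcomp Require Import zify.
From Stdlib Require Import FunctionalExtensionality.

Module Helpers.
Set Implicit Arguments.
Unset Strict Implicit.
Unset Printing Implicit Defensive.
Import GRing.Theory.
Local Open Scope ring_scope.
Local Open Scope quotient_scope.

Section Shuffle.
Variables (k : comPzRingType) (V : lmodType k).
Implicit Type W : zmodType.

Definition SL (W : zmodType) (f : seq V -> W) (L : seq (seq V)) : W :=
  \sum_(w <- L) f w.

Lemma shuffle_nil_l (t : seq V) : shuffle [::] t = [:: t].
Proof. by []. Qed.

Lemma shuffle_nil_r (s : seq V) : shuffle s [::] = [:: s].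
Proof. by case: s. Qed.

Lemma shuffle_cons (a b : V) s t : shuffle (a :: s) (b :: t) =
  map (cons a) (shuffle s (b :: t)) ++ map (cons b) (shuffle (a :: s) t).
Proof. by []. Qed.

Lemma SL_cat W (f : seq V -> W) L1 L2 : SL f (L1 ++ L2) = SL f L1 + SL f L2.
Proof. by rewrite /SL big_cat. Qed.

Lemma SL_map_cons W (f : seq V -> W) a L :
  SL f (map (cons a) L) = SL (fun w => f (a :: w)) L.
Proof. by rewrite /SL big_map. Qed.

Lemma SL1 W (f : seq V -> W) w : SL f [:: w] = f w.
Proof. by rewrite /SL big_seq1. Qed.

Lemma SL_nil W (f : seq V -> W) : SL f [::] = 0.
Proof. by rewrite /SL big_nil. Qed.

Lemma SL_ext W (f g : seq V -> W) L : f =1 g -> SL f L = SL g L.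
Proof. by move=> H; rewrite /SL; apply: eq_bigr. Qed.

Definition hd_part W (F : (seq V -> W) -> seq V -> W) (f : seq V -> W) (s : seq V) : W :=
  if s is a :: s' then F (fun w => f (a :: w)) s' else 0.

Lemma sh_rec W (f : seq V -> W) s t : (s != [::]) || (t != [::]) ->
  SL f (shuffle s t) =
  hd_part (fun g s' => SL g (shuffle s' t)) f s +
  hd_part (fun g t' => SL g (shuffle s t')) f t.
Proof.
case: s => [|a s]; case: t => [|b t] // _; rewrite /hd_part.
- by rewrite !shuffle_nil_l !SL1 add0r.
- by rewrite !shuffle_nil_r !SL1 addr0.
- by rewrite shuffle_cons SL_cat !SL_map_cons.
Qed.

Lemma shC W (f : seq V -> W) s t : SL f (shuffle s t) = SL f (shuffle t s).
Proof.
have [n Hn] : exists n, (size s + size t <= n)%N by exists (size s + size t).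
elim: n W f s t Hn => [|n IH] W f [|a s] [|b t] Hn //.
rewrite !shuffle_cons !SL_cat !SL_map_cons addrC; congr (_ + _).
  + by apply: IH; rewrite /= addnS in Hn *.
  + by apply: IH.
Qed.

Definition PP W (f : seq V -> W) x y z :=
  \sum_(w <- shuffle x y) SL f (shuffle w z).

Lemma PP_rec W (f : seq V -> W) x y z :
  [|| x != [::], y != [::] | z != [::]] ->
  PP f x y z = hd_part (fun g x' => PP g x' y z) f x +
               hd_part (fun g y' => PP g x y' z) f y +
               hd_part (fun g z' => PP g x y z') f z.
Proof.
have Hc : forall w z0, w != [::] -> forall (g : seq V -> W),
  SL g (shuffle w z0) = hd_part (fun g s' => SL g (shuffle s' z0)) g w +
      hd_part (fun g t' => SL g (shuffle w t')) g z0.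
  by move=> w z0 Hw g; rewrite sh_rec // Hw.
case: x => [|a x]; case: y => [|b y] /=.
- case: z => [|c z] //= _.
  by rewrite /PP /= !big_seq1 !shuffle_nil_l !SL1 add0r add0r.
- move=> _; rewrite /PP !shuffle_nil_l !big_seq1 (Hc (b :: y)) // add0r.
  by case: z => [|c z] //=; rewrite big_seq1.
- move=> _; rewrite /PP !shuffle_nil_r !big_seq1 (Hc (a :: x)) // addr0.
  by case: z => [|c z] //=; rewrite big_seq1.
- move=> _; rewrite /PP shuffle_cons big_cat !big_map.
  under eq_bigr do rewrite (Hc (a :: _)) // /hd_part.
  under [X in _ + X = _]eq_bigr do rewrite (Hc (b :: _)) // /hd_part.
  rewrite !big_split -!addrA; congr (_ + _).
  rewrite addrCA; congr (_ + _).
  case: z => [|c z].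
  - by rewrite !big1 ?addr0.
  - by rewrite /hd_part big_cat !big_map.
Qed.

Lemma PP_sym W (f : seq V -> W) x y z : PP f x y z = PP f z y x.
Proof.
have [n Hn] : exists n, (size x + size y + size z <= n)%N.
  by exists (size x + size y + size z).
elim: n W f x y z Hn => [|n IH] W f x y z Hn.
- case: x Hn => [|a x] //; case: y => [|b y] //; case: z => [|c z] //.
- case/boolP: [|| x != [::], y != [::] | z != [::]] => Hne.
  + have Hne' : [|| z != [::], y != [::] | x != [::]].
      by move: Hne {Hn}; case: x; case: y; case: z.
    rewrite (PP_rec _ Hne) (PP_rec _ Hne').
    rewrite [RHS]addrC [X in _ = _ + X]addrC addrA; congr (_ + _ + _).
    * case: x Hn {Hne Hne'} => [|a x] //= Hn; apply: IH.
      by move: Hn; lia.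
    * case: y Hn {Hne Hne'} => [|b y] //= Hn; apply: IH.
      by move: Hn; lia.
    * case: z Hn {Hne Hne'} => [|c z] //= Hn; apply: IH.
      by move: Hn; lia.
  + by move: Hne {Hn}; case: x; case: y; case: z.
Qed.

Definition QQ W (f : seq V -> W) x y z :=
  \sum_(w <- shuffle y z) SL f (shuffle x w).

Lemma QQ_PP W (f : seq V -> W) x y z : QQ f x y z = PP f z y x.
Proof.
rewrite /QQ /PP.
under eq_bigr do rewrite shC.
by rewrite -/(SL (fun w => SL f (shuffle w x)) _) shC.
Qed.

Lemma shA W (f : seq V -> W) x y z : PP f x y z = QQ f x y z.
Proof. by rewrite QQ_PP PP_sym. Qed.

End Shuffle.

Section Dword.
Variables (k : comPzRingType) (V : lmodType k) (lambda : k) (d0 : V -> V).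
Implicit Type W : lmodType k.

Definition cword (w : seq V) (X : {set 'I_(size w)}) : seq V :=
  [seq (if i \in X then d0 w`_i else w`_i) | i : 'I_(size w)].

Lemma eval_dword W (G : seq V -> W) w :
  fsum_eval G (dword lambda d0 w) =
  \sum_(X : {set 'I_(size w)} | X != set0) lambda ^+ #|X|.-1 *: G (cword X).
Proof.
rewrite /fsum_eval /dword big_map big_enum /=.
by apply: eq_bigl => X; rewrite inE.
Qed.

Definition up n (Y : {set 'I_n}) : {set 'I_n.+1} := [set lift ord0 i | i in Y].
Definition down n (X : {set 'I_n.+1}) : {set 'I_n} := [set i | lift ord0 i \in X].

Lemma down_up n (Y : {set 'I_n}) : down (up Y) = Y.
Proof. by apply/setP => i; rewrite inE mem_imset //; exact: lift_inj. Qed.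

Lemma down_U1 n (Y : {set 'I_n}) : down (ord0 |: up Y) = Y.
Proof.
apply/setP => i; rewrite inE in_setU1 mem_imset; last exact: lift_inj.
by rewrite eq_sym (negbTE (neq_lift _ _)).
Qed.

Lemma up_down n (X : {set 'I_n.+1}) : ord0 \notin X -> up (down X) = X.
Proof.
move=> H0; apply/setP => x; rewrite /up.
case: (unliftP ord0 x) => [j ->|->].
- by rewrite mem_imset ?inE //; exact: lift_inj.
- rewrite (negbTE H0); apply/negP => /imsetP [j _] /eqP.
  by rewrite (negbTE (neq_lift _ _)).
Qed.

Lemma U1_up_down n (X : {set 'I_n.+1}) : ord0 \in X -> ord0 |: up (down X) = X.
Proof.
move=> H0; apply/setP => x; rewrite in_setU1.
case: (unliftP ord0 x) => [j ->|->].
- rewrite eq_sym (negbTE (neq_lift _ _)) /= /up mem_imset ?inE //.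
  exact: lift_inj.
- by rewrite eqxx H0.
Qed.

Lemma cword_set0 w : cword (set0 : {set 'I_(size w)}) = w.
Proof.
rewrite /cword /image_mem.
under eq_map do rewrite inE.
by rewrite (map_comp (nth 0 w) val) val_enum_ord -/(mkseq _ _) mkseq_nth.
Qed.

Lemma ord0_notin_up n (Y : {set 'I_n}) : ord0 \notin up Y.
Proof.
apply/negP => /imsetP [j _] /eqP.
by rewrite (negbTE (neq_lift _ _)).
Qed.

Lemma cword_up a w (Y : {set 'I_(size w)}) :
  @cword (a :: w) (up Y) = a :: cword Y.
Proof.
rewrite /cword /image_mem enum_ordSl map_cons -map_comp.
rewrite (negbTE (ord0_notin_up Y)); congr (_ :: _).
apply: eq_map => i /=; rewrite mem_imset; last exact: lift_inj.
by rewrite add0n.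
Qed.

Lemma cword_U1up a w (Y : {set 'I_(size w)}) :
  @cword (a :: w) (ord0 |: up Y) = d0 a :: cword Y.
Proof.
rewrite /cword /image_mem enum_ordSl map_cons -map_comp.
rewrite setU11; congr (_ :: _).
apply: eq_map => i /=; rewrite in_setU1 (eq_sym _ ord0) (negbTE (neq_lift _ _)) /=.
rewrite mem_imset; last exact: lift_inj.
by rewrite add0n.
Qed.

Lemma dword_nil W (G : seq V -> W) : fsum_eval G (dword lambda d0 [::]) = 0.
Proof.
rewrite eval_dword big_pred0 // => X.
apply/negbTE; rewrite negbK; apply/eqP/setP => i; case: i => i Hi; by [].
Qed.

Lemma dword_rec W (G : seq V -> W) a w :
  fsum_eval G (dword lambda d0 (a :: w)) =
  G (d0 a :: w) + fsum_eval (fun x => G (a :: x)) (dword lambda d0 w)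
  + lambda *: fsum_eval (fun x => G (d0 a :: x)) (dword lambda d0 w).
Proof.
rewrite !eval_dword.
rewrite (bigID (fun X : {set 'I_(size w).+1} => ord0 \in X)) /=.
have E1 : \sum_(X : {set 'I_(size w).+1} | (X != set0) && (ord0 \in X))
      lambda ^+ #|X|.-1 *: G (@cword (a :: w) X) =
   \sum_(Y : {set 'I_(size w)}) lambda ^+ #|ord0 |: up Y|.-1 *:
       G (@cword (a :: w) (ord0 |: up Y)).
  rewrite (eq_bigl (fun X : {set 'I_(size w).+1} => ord0 \in X)); last first.
    move=> X; case H : (ord0 \in X); rewrite ?andbT ?andbF //.
    by apply/set0Pn; exists ord0.
  rewrite (reindex_onto (fun Y => ord0 |: up Y) (@down _)); last first.
    by move=> X HX; rewrite U1_up_down.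
  apply: eq_bigl => Y; by rewrite setU11 down_U1 eqxx.
have E2 : \sum_(X : {set 'I_(size w).+1} | (X != set0) && (ord0 \notin X))
      lambda ^+ #|X|.-1 *: G (@cword (a :: w) X) =
   \sum_(Y : {set 'I_(size w)} | Y != set0) lambda ^+ #|up Y|.-1 *:
       G (@cword (a :: w) (up Y)).
  rewrite (reindex_onto (@up _) (@down _)); last first.
    by move=> X /andP [_ HX]; rewrite up_down.
  apply: eq_bigl => Y; rewrite down_up eqxx andbT ord0_notin_up andbT.
  by rewrite -!card_gt0 card_imset //; exact: lift_inj.
rewrite E1 E2 (bigD1 set0) //= -!addrA; congr (_ + _).
  by rewrite cword_U1up cword_set0 /up imset0 setU0 cards1 expr0 scale1r.
rewrite scaler_sumr addrC; congr (_ + _); apply: eq_bigr => Y HY.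
- by rewrite /up card_imset ?cword_up //; exact: lift_inj.
- rewrite cardsU1 ord0_notin_up /up card_imset; last exact: lift_inj.
  rewrite cword_U1up add1n /= scalerA -exprS prednK //.
  by rewrite card_gt0.
Qed.

Lemma eval_dword_eq W (G G' : seq V -> W) w :
  (forall x, size x = size w -> G x = G' x) ->
  fsum_eval G (dword lambda d0 w) = fsum_eval G' (dword lambda d0 w).
Proof.
move=> H; rewrite !eval_dword; apply: eq_bigr => X _; rewrite H //.
by rewrite /cword /image_mem size_map -cardE card_ord.
Qed.

End Dword.

Section Mlin.
Variables (k : comPzRingType) (V : lmodType k).
Implicit Type W : lmodType k.

Definition mlin W (f : seq V -> W) : Prop :=
  forall (u w : seq V) (r : k) (a b : V),
    f (u ++ (r *: a + b) :: w) = r *: f (u ++ a :: w) + f (u ++ b :: w).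

Lemma multilinP W (f : seq V -> W) : multilin f <-> f [::] = 0 /\ mlin f.
Proof. by []. Qed.

Lemma mlin_cons W (f : seq V -> W) c : mlin f -> mlin (fun w => f (c :: w)).
Proof. by move=> H u; apply: (H (c :: u)). Qed.

Lemma mlin_ext W (f g : seq V -> W) : f =1 g -> mlin f -> mlin g.
Proof. by move=> E H u w r a b; rewrite -!E. Qed.

Lemma multilin_ext W (f g : seq V -> W) : f =1 g -> multilin f -> multilin g.
Proof. by move=> E [H0 H]; split; [rewrite -E | exact: mlin_ext H]. Qed.

Lemma addr_perm6 (M : zmodType) (x1 x2 y1 y2 z1 z2 : M) :
  x1 + x2 + (y1 + y2) + (z1 + z2) = x1 + y1 + z1 + (x2 + y2 + z2).
Proof. by rewrite (addrACA x1 x2 y1 y2) (addrACA (x1 + y1) (x2 + y2) z1 z2). Qed.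

Lemma SL_lin_head W (f : seq V -> W) L r a b : mlin f ->
  SL (fun w => f ((r *: a + b) :: w)) L =
  r *: SL (fun w => f (a :: w)) L + SL (fun w => f (b :: w)) L.
Proof.
move=> H; rewrite /SL scaler_sumr -big_split; apply: eq_bigr => w _.
exact: (H [::]).
Qed.

Lemma mlin_sh_l W (f : seq V -> W) t : mlin f -> mlin (fun s => SL f (shuffle s t)).
Proof.
move=> Hf u v r a b.
have [n Hn] : exists n, (size u + size t <= n)%N by exists (size u + size t).
elim: n W f t u Hf Hn => [|n IH] W f t u Hf Hn.
  case: u Hn => [|//]; case: t => [|//] _.
  by rewrite !shuffle_nil_r !SL1; exact: (Hf [::]).
case: u Hn => [|y u] Hn.
- case: t Hn => [|c t] Hn.
    by rewrite !shuffle_nil_r !SL1; exact: (Hf [::]).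
  rewrite !cat0s !shuffle_cons !SL_cat !SL_map_cons SL_lin_head //.
  rewrite (IH _ _ t [::] (mlin_cons c Hf)); last by move: Hn => /=; lia.
  by rewrite scalerDr addrACA.
- case: t Hn => [|c t] Hn.
    by rewrite !shuffle_nil_r !SL1; exact: (Hf (y :: u)).
  rewrite !cat_cons !shuffle_cons !SL_cat !SL_map_cons.
  rewrite (IH _ _ (c :: t) u (mlin_cons y Hf)); last by move: Hn => /=; lia.
  rewrite -!cat_cons (IH _ _ t (y :: u) (mlin_cons c Hf)); last by move: Hn => /=; lia.
  by rewrite scalerDr addrACA.
Qed.

Lemma mlin_sh_r W (f : seq V -> W) s : mlin f -> mlin (fun t => SL f (shuffle s t)).
Proof.
move=> Hf; apply: mlin_ext (mlin_sh_l s Hf) => t; exact: shC.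
Qed.

Lemma SL_prec W (f : seq V -> W) s t : t != [::] ->
  SL f (word_prec s t) = if s is a :: s' then SL (fun w => f (a :: w)) (shuffle s' t) else 0.
Proof. by case: t => // c t _; case: s => [|a s]; rewrite ?SL_nil ?SL_map_cons. Qed.

Lemma SL_prec_nil_l W (f : seq V -> W) t : SL f (word_prec [::] t) = 0.
Proof. by case: t => *; rewrite SL_nil. Qed.

Lemma SL_prec_nil_r W (f : seq V -> W) s : SL f (word_prec s [::]) = 0.
Proof. by rewrite SL_nil. Qed.

Lemma SL_succ W (f : seq V -> W) s t : SL f (word_succ s t) = SL f (word_prec t s).
Proof.
case: s => [|a s]; case: t => [|b t]; rewrite ?SL_nil //.
by rewrite /= !SL_map_cons shC.
Qed.

Lemma SL_sh_split W (f : seq V -> W) s t : s != [::] -> t != [::] ->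
  SL f (shuffle s t) = SL f (word_prec s t) + SL f (word_prec t s).
Proof.
case: s => [|a s] // _; case: t => [|b t] // _.
by rewrite shuffle_cons SL_cat /word_prec !SL_map_cons [X in _ + X]shC.
Qed.

Lemma multilin_prec_l W (f : seq V -> W) t : multilin f ->
  multilin (fun s => SL f (word_prec s t)).
Proof.
move=> [_ Hf]; split; first exact: SL_prec_nil_l.
case/boolP: (t == [::]) => [/eqP -> | Ht] u v r a b.
  by rewrite !SL_prec_nil_r scaler0 addr0.
rewrite !SL_prec //; case: u => [|y u].
- by rewrite !cat0s SL_lin_head.
- by rewrite !cat_cons; apply: mlin_sh_l; apply: mlin_cons.
Qed.

Lemma multilin_prec_r W (f : seq V -> W) s : multilin f ->
  multilin (fun t => SL f (word_prec s t)).
Proof.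
move=> [_ Hf]; split; first exact: SL_prec_nil_r.
move=> u v r a b; rewrite !SL_prec; try by case: u.
case: s => [|c s]; first by rewrite scaler0 addr0.
by apply: mlin_sh_r; apply: mlin_cons.
Qed.

Lemma multilin_succ_l W (f : seq V -> W) t : multilin f ->
  multilin (fun s => SL f (word_succ s t)).
Proof.
move=> Hf; apply: multilin_ext (multilin_prec_r t Hf) => s.
by rewrite SL_succ.
Qed.

Lemma multilin_succ_r W (f : seq V -> W) s : multilin f ->
  multilin (fun t => SL f (word_succ s t)).
Proof.
move=> Hf; apply: multilin_ext (multilin_prec_l s Hf) => t.
by rewrite SL_succ.
Qed.

Variables (lambda : k) (d0 : V -> V).
Hypothesis Hd0 : linear d0.

Lemma mlin_dword W (f : seq V -> W) : mlin f ->
  mlin (fun w => fsum_eval f (dword lambda d0 w)).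
Proof.
move=> Hf u; elim: u W f Hf => [|y u IH] W f Hf v r a b.
- rewrite !cat0s !dword_rec Hd0 (Hf [::]).
  have L : forall (g : seq V -> W) e (a b : V), mlin g ->
     fsum_eval (fun x => g ((r *: a + b) :: x)) e =
     r *: fsum_eval (fun x => g (a :: x)) e + fsum_eval (fun x => g (b :: x)) e.
    move=> g e a' b' Hg; rewrite /fsum_eval scaler_sumr -big_split; apply: eq_bigr => t _.
    by rewrite (Hg [::]) scalerDr !scalerA mulrC.
  rewrite !L //.
  rewrite !scalerDr !scalerA (mulrC lambda r) -!scalerA.
  by rewrite !cat0s addr_perm6.
- rewrite !cat_cons !dword_rec.
  rewrite -!cat_cons (Hf (d0 y :: u)).
  rewrite (IH _ _ (mlin_cons y Hf)) (IH _ _ (mlin_cons (d0 y) Hf)).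
  rewrite !scalerDr !scalerA mulrC -scalerA.
  by rewrite addr_perm6.
Qed.

End Mlin.

Lemma multilin_dword (k : comPzRingType) (V : lmodType k) (lambda : k) (d0 : V -> V)
  (W : lmodType k) (f : seq V -> W) :
  linear d0 -> multilin f -> multilin (fun w => fsum_eval f (dword lambda d0 w)).
Proof.
move=> Hd0 [_ Hf]; split; first exact: dword_nil.
exact: mlin_dword.
Qed.

Section Quot.
Variables (k : comPzRingType) (V : lmodType k).
Implicit Type W : lmodType k.
Notation pi := (\pi_(Tplus V)).
Notation fs := (fsum V).

Lemma eval_fbilin W (f : seq V -> W) op (e1 e2 : fs) :
  fsum_eval f (fbilin op e1 e2) =
  \sum_(t <- e1) \sum_(u <- e2) (t.1 * u.1) *: SL f (op t.2 u.2).
Proof.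
rewrite /fsum_eval /fbilin big_flatten /= big_allpairs_dep /=.
apply: eq_bigr => t _; apply: eq_bigr => u _.
by rewrite big_map /SL scaler_sumr.
Qed.

Lemma eval_fdiff W (f : seq V -> W) lambda d0 (e : fs) :
  fsum_eval f (fdiff lambda d0 e) =
  fsum_eval (fun w => fsum_eval f (dword lambda d0 w)) e.
Proof.
rewrite /fsum_eval /fdiff big_flatten /= big_map.
apply: eq_bigr => t _; rewrite big_map scaler_sumr; apply: eq_bigr => u _.
by rewrite scalerA.
Qed.

Lemma dsum_l W (F : seq V -> seq V -> W) (e1 e2 : fs) :
  \sum_(t <- e1) \sum_(u <- e2) (t.1 * u.1) *: F t.2 u.2 =
  fsum_eval (fun s => \sum_(u <- e2) u.1 *: F s u.2) e1.
Proof.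
rewrite /fsum_eval; apply: eq_bigr => t _; rewrite scaler_sumr.
by apply: eq_bigr => u _; rewrite scalerA.
Qed.

Lemma dsum_r W (F : seq V -> seq V -> W) (e1 e2 : fs) :
  \sum_(t <- e1) \sum_(u <- e2) (t.1 * u.1) *: F t.2 u.2 =
  fsum_eval (fun s => \sum_(t <- e1) t.1 *: F t.2 s) e2.
Proof.
rewrite exchange_big /fsum_eval; apply: eq_bigr => u _; rewrite scaler_sumr.
by apply: eq_bigr => t _; rewrite scalerA mulrC.
Qed.

Lemma multilin_sum W (F : seq V -> seq V -> W) (e : fs) :
  (forall u, multilin (fun s => F s u)) ->
  multilin (fun s => \sum_(u <- e) u.1 *: F s u.2).
Proof.
move=> H; split.
  by rewrite big1 // => u _; case: (H u.2) => -> _; rewrite scaler0.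
move=> x y r a b; rewrite scaler_sumr -big_split; apply: eq_bigr => u _.
case: (H u.2) => _ ->; rewrite scalerDr !scalerA.
by rewrite mulrC.
Qed.

Definition goodop (op : seq V -> seq V -> seq (seq V)) :=
  (forall W (f : seq V -> W) t, multilin f -> multilin (fun s => SL f (op s t))) /\
  (forall W (f : seq V -> W) s, multilin f -> multilin (fun t => SL f (op s t))).

Lemma fbilin_congr op (e1 e1' e2 e2' : fs) : goodop op ->
  tequiv e1 e1' -> tequiv e2 e2' -> tequiv (fbilin op e1 e2) (fbilin op e1' e2').
Proof.
move=> [Hl Hr] H1 H2 W f Hf; rewrite !eval_fbilin.
rewrite (dsum_l (fun s t => SL f (op s t))).
rewrite H1; last by apply: (@multilin_sum W (fun s u => SL f (op s u))) => u; exact: Hl.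
rewrite -(dsum_l (fun s t => SL f (op s t))).
rewrite (dsum_r (fun s t => SL f (op s t))) H2.
  by rewrite -(dsum_r (fun s t => SL f (op s t))).
by apply: (@multilin_sum W (fun s t => SL f (op t s))) => u; exact: Hr.
Qed.

Lemma good_prec : goodop (@word_prec k V).
Proof. split => W f; [exact: multilin_prec_l | exact: multilin_prec_r]. Qed.

Lemma good_succ : goodop (@word_succ k V).
Proof. split => W f; [exact: multilin_succ_l | exact: multilin_succ_r]. Qed.

Lemma precV_pi (e1 e2 : fs) : precV (pi e1) (pi e2) = pi (fbilin (@word_prec k V) e1 e2).
Proof.
apply: pi_tequiv; apply: fbilin_congr; [exact: good_prec | exact: tequiv_repr | exact: tequiv_repr].
Qed.

Lemma succV_pi (e1 e2 : fs) : succV (pi e1) (pi e2) = pi (fbilin (@word_succ k V) e1 e2).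
Proof.
apply: pi_tequiv; apply: fbilin_congr; [exact: good_succ | exact: tequiv_repr | exact: tequiv_repr].
Qed.

Lemma dV_pi lambda d0 (e : fs) : linear d0 -> dV lambda d0 (pi e) = pi (fdiff lambda d0 e).
Proof.
move=> Hd0; apply: pi_tequiv => W f Hf; rewrite !eval_fdiff.
apply: tequiv_repr; exact: multilin_dword.
Qed.

Lemma piD (e1 e2 : fs) : pi (e1 ++ e2) = pi e1 + pi e2.
Proof. by rewrite taddE tadd_pi. Qed.

Lemma piZ c (e : fs) : pi (fscale c e) = c *: pi e.
Proof. by rewrite -tscale_pi. Qed.

Lemma pi0 : pi [::] = 0 :> Tplus V.
Proof. by []. Qed.

Lemma pi_eq (e1 e2 : fs) :
  (forall W (f : seq V -> W), multilin f -> fsum_eval f e1 = fsum_eval f e2) ->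
  pi e1 = pi e2.
Proof. by move=> H; apply: pi_tequiv => W f Hf; apply: H. Qed.

Lemma pi_eq_all (e1 e2 : fs) :
  (forall W (f : seq V -> W), fsum_eval f e1 = fsum_eval f e2) ->
  pi e1 = pi e2.
Proof. by move=> H; apply: pi_eq => W f _; apply: H. Qed.

End Quot.

Section Words.
Variables (k : comPzRingType) (V : lmodType k).
Implicit Type W : lmodType k.

Lemma SL_sh_eq W (g h : seq V -> W) s t :
  (forall w, size w = (size s + size t)%N -> g w = h w) ->
  SL g (shuffle s t) = SL h (shuffle s t).
Proof.
have [n Hn] : exists n, (size s + size t <= n)%N by exists (size s + size t).
elim: n W g h s t Hn => [|n IH] W g h [|a s] [|b t] Hn H;
  try by rewrite ?shuffle_nil_r ?shuffle_nil_l !SL1; apply: H; rewrite ?addn0.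
  by move: Hn => /=; lia.
rewrite !shuffle_cons !SL_cat !SL_map_cons; congr (_ + _); apply: IH.
- by move: Hn => /=; lia.
- by move=> w Hw; apply: H => /=; rewrite Hw.
- by move: Hn => /=; lia.
- by move=> w Hw; apply: H => /=; move: Hw => /= ->; lia.
Qed.

Lemma SLD W (f g : seq V -> W) L : SL (fun x => f x + g x) L = SL f L + SL g L.
Proof. by rewrite /SL big_split. Qed.

Lemma SLZ W (f : seq V -> W) c L : SL (fun x => c *: f x) L = c *: SL f L.
Proof. by rewrite /SL scaler_sumr. Qed.

Lemma SL0 W L : SL (fun _ : seq V => 0 : W) L = 0.
Proof. by rewrite /SL big1. Qed.

Lemma SL_ext0 W (g : seq V -> W) L : (forall w, g w = 0) -> SL g L = 0.
Proof. by move=> H; rewrite /SL big1. Qed.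

Lemma SL_succ_nil_r W (f : seq V -> W) s : SL f (word_succ s [::]) = 0.
Proof. by case: s => *; rewrite SL_nil. Qed.

Lemma SL_succ_nil_l W (f : seq V -> W) t : SL f (word_succ [::] t) = 0.
Proof. by rewrite SL_nil. Qed.

Lemma shA_SL W (f : seq V -> W) x y z :
  SL (fun w => SL f (shuffle w z)) (shuffle x y) =
  SL (fun w => SL f (shuffle x w)) (shuffle y z).
Proof. exact: shA. Qed.

Lemma ax1w W (f : seq V -> W) x y z :
  SL (fun w => SL f (word_prec w z)) (word_prec x y) =
  SL (fun w => SL f (word_prec x w)) (word_prec y z) +
  SL (fun w => SL f (word_prec x w)) (word_succ y z).
Proof.
case: z => [|c z].
  rewrite [LHS]SL_ext0; last by move=> w; rewrite ?SL_prec_nil_r.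
  by rewrite ?SL_prec_nil_r ?SL_succ_nil_r ?addr0 ?add0r.
case: y => [|b y].
  by rewrite ?SL_prec_nil_r ?SL_prec_nil_l ?SL_succ_nil_l ?addr0 ?add0r.
case: x => [|a x].
  rewrite ?SL_prec_nil_l !SL_ext0 ?addr0 // => w; exact: SL_prec_nil_l.
rewrite SL_succ -SL_sh_split // SL_map_cons.
under SL_ext do rewrite SL_prec //.
rewrite shA_SL.
apply: SL_sh_eq => w Hw; rewrite SL_prec //.
by case: w Hw.
Qed.

Lemma ax2w W (f : seq V -> W) x y z :
  SL (fun w => SL f (word_prec w z)) (word_succ x y) =
  SL (fun w => SL f (word_succ x w)) (word_prec y z).
Proof.
case: z => [|c z].
  rewrite [LHS]SL_ext0; last by move=> w; rewrite ?SL_prec_nil_r.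
  by rewrite ?SL_prec_nil_r.
case: y => [|b y]; first by rewrite ?SL_succ_nil_r SL_prec_nil_l.
case: x => [|a x].
  rewrite ?SL_succ_nil_l [RHS]SL_ext0 // => w; exact: SL_succ_nil_l.
rewrite /word_succ /word_prec !SL_map_cons.
under SL_ext do rewrite SL_map_cons.
under [RHS]SL_ext do rewrite SL_map_cons.
by rewrite shA_SL.
Qed.

Lemma ax3w W (f : seq V -> W) x y z :
  SL (fun w => SL f (word_succ w z)) (word_prec x y) +
  SL (fun w => SL f (word_succ w z)) (word_succ x y) =
  SL (fun w => SL f (word_succ x w)) (word_succ y z).
Proof.
case: z => [|c z].
  rewrite ?SL_succ_nil_r !SL_ext0 ?addr0 // => w; exact: SL_succ_nil_r.
case: y => [|b y]; first by rewrite ?SL_prec_nil_r ?SL_succ_nil_r ?SL_succ_nil_l ?addr0 ?add0r.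
case: x => [|a x].
  by rewrite ?SL_prec_nil_l ?SL_succ_nil_l ?addr0 ?add0r [RHS]SL_ext0 // => w; exact: SL_succ_nil_l.
rewrite [X in _ + X]SL_succ -SL_sh_split //.
rewrite /word_succ SL_map_cons.
rewrite (SL_sh_eq (h := fun w => SL (fun w => f (c :: w)) (shuffle w z))); last first.
  by move=> w Hw; case: w Hw => // d w _; rewrite SL_map_cons.
under [RHS]SL_ext do rewrite SL_map_cons.
by rewrite shA_SL.
Qed.

End Words.

Section Deriv.
Variables (k : comPzRingType) (V : lmodType k) (lambda : k) (d0 : V -> V).
Implicit Type W : lmodType k.

Definition DW W (f : seq V -> W) w := fsum_eval f (dword lambda d0 w).

Lemma DW_ext W (f g : seq V -> W) w : (forall x, f x = g x) -> DW f w = DW g w.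
Proof. by move=> H; rewrite /DW /fsum_eval; apply: eq_bigr => p _; rewrite H. Qed.

Lemma DW_size W (f g : seq V -> W) w :
  (forall x, size x = size w -> f x = g x) -> DW f w = DW g w.
Proof. exact: eval_dword_eq. Qed.

Lemma DW0 W w : DW (fun _ => 0 : W) w = 0.
Proof. by rewrite /DW /fsum_eval big1 // => p _; rewrite scaler0. Qed.

Lemma DW_ext0 W (f : seq V -> W) w : (forall x, f x = 0) -> DW f w = 0.
Proof. by move=> H; rewrite (DW_ext _ H) DW0. Qed.

Lemma DWD W (f g : seq V -> W) w : DW (fun x => f x + g x) w = DW f w + DW g w.
Proof.
rewrite /DW /fsum_eval -big_split; apply: eq_bigr => p _; exact: scalerDr.
Qed.

Lemma DWZ W (f : seq V -> W) c w : DW (fun x => c *: f x) w = c *: DW f w.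
Proof.
rewrite /DW /fsum_eval scaler_sumr; apply: eq_bigr => p _.
by rewrite !scalerA mulrC.
Qed.

Lemma DW_swap W (G : seq V -> seq V -> W) s t :
  DW (fun x => DW (fun y => G x y) t) s = DW (fun y => DW (fun x => G x y) s) t.
Proof.
rewrite /DW /fsum_eval.
under eq_bigr do rewrite scaler_sumr.
rewrite exchange_big; apply: eq_bigr => q _; rewrite scaler_sumr.
by apply: eq_bigr => p _; rewrite !scalerA mulrC.
Qed.

Lemma DW_nil W (f : seq V -> W) : DW f [::] = 0.
Proof. exact: dword_nil. Qed.

Lemma DW_cons W (f : seq V -> W) a w :
  DW f (a :: w) = f (d0 a :: w) + DW (fun x => f (a :: x)) w
                  + lambda *: DW (fun x => f (d0 a :: x)) w.
Proof. exact: dword_rec. Qed.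

Lemma perm7 (M : zmodType) (T0 A1 A2 X Y Z U : M) :
  T0 + (A1 + A2 + X) + (Y + Z + U) = T0 + A1 + Y + A2 + (Z + X + U).
Proof.
rewrite -!addrA; congr (_ + (_ + _)).
rewrite [RHS]addrCA; congr (_ + _).
by rewrite (addrCA Z X U) (addrCA Y X).
Qed.

Definition Sst W (f : seq V -> W) s t :=
  SL (DW f) (shuffle s t) =
  DW (fun x => SL f (shuffle x t)) s + DW (fun y => SL f (shuffle s y)) t
  + lambda *: DW (fun x => DW (fun y => SL f (shuffle x y)) t) s.

Definition Pst W (f : seq V -> W) s t :=
  SL (DW f) (word_prec s t) =
  DW (fun x => SL f (word_prec x t)) s + DW (fun y => SL f (word_prec s y)) t
  + lambda *: DW (fun x => DW (fun y => SL f (word_prec x y)) t) s.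

Lemma Pst_nil_l W (f : seq V -> W) t : Pst f [::] t.
Proof.
rewrite /Pst SL_prec_nil_l DW_nil add0r DW_nil scaler0 addr0.
by rewrite DW_ext0 // => y; rewrite SL_prec_nil_l.
Qed.

Lemma Pst_nil_r W (f : seq V -> W) s : Pst f s [::].
Proof.
rewrite /Pst SL_prec_nil_r DW_nil addr0 DW_ext0 ?add0r; last first.
  by move=> x; rewrite SL_prec_nil_r.
by rewrite DW_ext0 ?scaler0 // => x; rewrite DW_nil.
Qed.

Lemma Pst_step a s t : t != [::] -> (forall W (f : seq V -> W), Sst f s t) ->
  forall W (f : seq V -> W), Pst f (a :: s) t.
Proof.
move=> Ht HS W f; rewrite /Pst SL_prec //.
under SL_ext do rewrite DW_cons.
rewrite !SLD SLZ (HS _ (fun w => f (a :: w))) (HS _ (fun w => f (d0 a :: w))).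
rewrite (DW_cons (fun x => SL f (word_prec x t))).
rewrite (DW_cons (fun x => DW (fun y => SL f (word_prec x y)) t)).
rewrite SL_prec //.
rewrite (DW_ext (f := fun x => SL f (word_prec (a :: x) t)) (g := fun x => SL (fun w => f (a :: w)) (shuffle x t))); last first.
  by move=> x; rewrite SL_prec.
rewrite (DW_ext (f := fun x => SL f (word_prec (d0 a :: x) t)) (g := fun x => SL (fun w => f (d0 a :: w)) (shuffle x t))); last first.
  by move=> x; rewrite SL_prec.
have E : forall c, DW (fun y => SL f (word_prec (c :: s) y)) t =
                   DW (fun y => SL (fun w => f (c :: w)) (shuffle s y)) t.
  move=> c; apply: DW_size => y Hy; rewrite SL_prec //.
  by apply/eqP => Hy0; move: Ht; rewrite -size_eq0 -Hy Hy0.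
rewrite !E.
rewrite (DW_ext (f := fun x => DW (fun y => SL f (word_prec (a :: x) y)) t)
   (g := fun x => DW (fun y => SL (fun w => f (a :: w)) (shuffle x y)) t)); last first.
  move=> x; apply: DW_size => y Hy; rewrite SL_prec //.
  by apply/eqP => Hy0; move: Ht; rewrite -size_eq0 -Hy Hy0.
rewrite (DW_ext (f := fun x => DW (fun y => SL f (word_prec (d0 a :: x) y)) t)
   (g := fun x => DW (fun y => SL (fun w => f (d0 a :: w)) (shuffle x y)) t)); last first.
  move=> x; apply: DW_size => y Hy; rewrite SL_prec //.
  by apply/eqP => Hy0; move: Ht; rewrite -size_eq0 -Hy Hy0.
by rewrite !scalerDr perm7.
Qed.


Lemma perm6b (M : zmodType) (A1 A2 X B1 B2 Y : M) :
  (A1 + A2 + X) + (B1 + B2 + Y) = (A1 + B2) + (A2 + B1) + (X + Y).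
Proof.
rewrite addrACA; congr (_ + _).
by rewrite (addrC B1 B2) addrACA.
Qed.

Lemma Sst_nil_l W (f : seq V -> W) t : Sst f [::] t.
Proof.
rewrite /Sst SL1 !DW_nil scaler0 addr0 add0r; apply: DW_ext => y; by rewrite SL1.
Qed.

Lemma Sst_nil_r W (f : seq V -> W) s : Sst f s [::].
Proof.
rewrite /Sst shuffle_nil_r SL1 DW_nil addr0 (DW_ext0 (f := fun x => DW _ [::])).
  rewrite scaler0 addr0; apply: DW_ext => x; by rewrite shuffle_nil_r SL1.
by move=> x; rewrite DW_nil.
Qed.

Lemma Sst_all W (f : seq V -> W) s t : Sst f s t.
Proof.
have [n Hn] : exists n, (size s + size t <= n)%N by exists (size s + size t).
elim: n W f s t Hn => [|n IH] W f [|a s] [|b t] Hn.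
all: try exact: Sst_nil_l; try exact: Sst_nil_r.
- by move: Hn => /=; lia.
have P1 : Pst f (a :: s) (b :: t).
  by apply: Pst_step => // W' f'; apply: IH; move: Hn => /=; lia.
have P2 : Pst f (b :: t) (a :: s).
  by apply: Pst_step => // W' f'; apply: IH; move: Hn => /=; lia.
rewrite /Sst SL_sh_split // P1 P2.
rewrite (DW_size (f := fun x => SL f (shuffle x (b :: t)))
   (g := fun x => SL f (word_prec x (b :: t)) + SL f (word_prec (b :: t) x))); last first.
  by move=> x Hx; rewrite SL_sh_split //; apply/eqP => H0; move: Hx; rewrite H0.
rewrite (DW_size (f := fun y => SL f (shuffle (a :: s) y))
   (g := fun y => SL f (word_prec (a :: s) y) + SL f (word_prec y (a :: s)))); last first.
  by move=> x Hx; rewrite SL_sh_split //; apply/eqP => H0; move: Hx; rewrite H0.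
rewrite (DW_size (f := fun x => DW (fun y => SL f (shuffle x y)) (b :: t))
   (g := fun x => DW (fun y => SL f (word_prec x y)) (b :: t) +
                  DW (fun y => SL f (word_prec y x)) (b :: t))); last first.
  move=> x Hx; rewrite -DWD; apply: DW_size => y Hy.
  rewrite SL_sh_split //; apply/eqP => H0.
    by move: Hx; rewrite H0.
  by move: Hy; rewrite H0.
rewrite !DWD DW_swap scalerDr.
rewrite [X in _ = _ + (_ + lambda *: X)]DW_swap.
exact: perm6b.
Qed.

End Deriv.

Lemma Pst_all (k : comPzRingType) (V : lmodType k) (lambda : k) (d0 : V -> V)
  (W : lmodType k) (f : seq V -> W) s t : Pst lambda d0 f s t.
Proof.
case: s => [|a s]; first exact: Pst_nil_l.
case: t => [|b t]; first exact: Pst_nil_r.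
by apply: Pst_step => // W' f'; apply: Sst_all.
Qed.

Section Sums.
Variables (k : comPzRingType) (V : lmodType k).
Implicit Type W : lmodType k.
Notation fs := (fsum V).

Definition Bs W (G : seq V -> seq V -> W) (e1 e2 : fs) :=
  \sum_(t <- e1) \sum_(u <- e2) (t.1 * u.1) *: G t.2 u.2.

Definition Ts W (G : seq V -> seq V -> seq V -> W) (e1 e2 e3 : fs) :=
  \sum_(t <- e1) \sum_(u <- e2) \sum_(v <- e3) (t.1 * u.1 * v.1) *: G t.2 u.2 v.2.

Lemma evalB W (f : seq V -> W) op (e1 e2 : fs) :
  fsum_eval f (fbilin op e1 e2) = Bs (fun s t => SL f (op s t)) e1 e2.
Proof. exact: eval_fbilin. Qed.

Lemma Bs_ext W (G G' : seq V -> seq V -> W) e1 e2 :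
  (forall s t, G s t = G' s t) -> Bs G e1 e2 = Bs G' e1 e2.
Proof. by move=> H; apply: eq_bigr => t _; apply: eq_bigr => u _; rewrite H. Qed.

Lemma Bs_add W (G G' : seq V -> seq V -> W) e1 e2 :
  Bs G e1 e2 + Bs G' e1 e2 = Bs (fun s t => G s t + G' s t) e1 e2.
Proof.
rewrite /Bs -big_split; apply: eq_bigr => t _; rewrite -big_split.
by apply: eq_bigr => u _; rewrite scalerDr.
Qed.

Lemma Bs_Z W (G : seq V -> seq V -> W) c e1 e2 :
  c *: Bs G e1 e2 = Bs (fun s t => c *: G s t) e1 e2.
Proof.
rewrite /Bs scaler_sumr; apply: eq_bigr => t _; rewrite scaler_sumr.
by apply: eq_bigr => u _; rewrite !scalerA mulrC.
Qed.

Lemma Bs_swap W (G : seq V -> seq V -> W) e1 e2 :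
  Bs G e1 e2 = Bs (fun s t => G t s) e2 e1.
Proof.
rewrite /Bs exchange_big; apply: eq_bigr => t _; apply: eq_bigr => u _.
by rewrite mulrC.
Qed.

Lemma Bs_cat_r W (G : seq V -> seq V -> W) e1 e2 e3 :
  Bs G e1 (e2 ++ e3) = Bs G e1 e2 + Bs G e1 e3.
Proof. by rewrite /Bs -big_split; apply: eq_bigr => t _; rewrite big_cat. Qed.

Lemma Bs_cat_l W (G : seq V -> seq V -> W) e1 e2 e3 :
  Bs G (e1 ++ e2) e3 = Bs G e1 e3 + Bs G e2 e3.
Proof. by rewrite /Bs big_cat. Qed.

Lemma Bs_scale_r W (G : seq V -> seq V -> W) c e1 e2 :
  Bs G e1 (fscale c e2) = c *: Bs G e1 e2.
Proof.
rewrite /Bs scaler_sumr; apply: eq_bigr => t _; rewrite big_map scaler_sumr.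
by apply: eq_bigr => u _ /=; rewrite scalerA mulrCA.
Qed.

Lemma Bs_scale_l W (G : seq V -> seq V -> W) c e1 e2 :
  Bs G (fscale c e1) e2 = c *: Bs G e1 e2.
Proof.
rewrite /Bs big_map scaler_sumr; apply: eq_bigr => t _; rewrite scaler_sumr.
by apply: eq_bigr => u _ /=; rewrite scalerA mulrA.
Qed.

Lemma Bs_fdiff_l W (G : seq V -> seq V -> W) lambda d0 e1 e2 :
  Bs G (fdiff lambda d0 e1) e2 = Bs (fun s t => DW lambda d0 (fun x => G x t) s) e1 e2.
Proof.
rewrite /Bs /fdiff big_flatten /= big_map; apply: eq_bigr => t _.
rewrite big_map exchange_big; apply: eq_bigr => u _.
rewrite /DW /fsum_eval scaler_sumr; apply: eq_bigr => q _ /=.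
by rewrite scalerA mulrAC.
Qed.

Lemma Bs_fdiff_r W (G : seq V -> seq V -> W) lambda d0 e1 e2 :
  Bs G e1 (fdiff lambda d0 e2) = Bs (fun s t => DW lambda d0 (fun y => G s y) t) e1 e2.
Proof.
rewrite /Bs /fdiff; apply: eq_bigr => t _.
rewrite big_flatten /= big_map; apply: eq_bigr => u _.
rewrite big_map /DW /fsum_eval scaler_sumr; apply: eq_bigr => q _ /=.
by rewrite scalerA mulrA.
Qed.

Lemma Bs_fbilin_l W (G : seq V -> seq V -> W) op e1 e2 e3 :
  Bs G (fbilin op e1 e2) e3 = Ts (fun x y z => SL (fun w => G w z) (op x y)) e1 e2 e3.
Proof.
rewrite /Bs /Ts /fbilin big_flatten /= big_allpairs_dep /=.
apply: eq_bigr => t _; apply: eq_bigr => u _.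
rewrite big_map exchange_big; apply: eq_bigr => v _.
by rewrite /SL scaler_sumr.
Qed.

Lemma Bs_fbilin_r W (G : seq V -> seq V -> W) op e1 e2 e3 :
  Bs G e1 (fbilin op e2 e3) = Ts (fun x y z => SL (fun w => G x w) (op y z)) e1 e2 e3.
Proof.
rewrite /Bs /Ts; apply: eq_bigr => t _.
rewrite /fbilin big_flatten /= big_allpairs_dep /=.
apply: eq_bigr => u _; apply: eq_bigr => v _.
by rewrite big_map /SL scaler_sumr; apply: eq_bigr => w _; rewrite mulrA.
Qed.

Lemma Ts_ext W (G G' : seq V -> seq V -> seq V -> W) e1 e2 e3 :
  (forall x y z, G x y z = G' x y z) -> Ts G e1 e2 e3 = Ts G' e1 e2 e3.
Proof.
move=> H; apply: eq_bigr => t _; apply: eq_bigr => u _; apply: eq_bigr => v _.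
by rewrite H.
Qed.

Lemma Ts_add W (G G' : seq V -> seq V -> seq V -> W) e1 e2 e3 :
  Ts G e1 e2 e3 + Ts G' e1 e2 e3 = Ts (fun x y z => G x y z + G' x y z) e1 e2 e3.
Proof.
rewrite /Ts -big_split; apply: eq_bigr => t _; rewrite -big_split.
apply: eq_bigr => u _; rewrite -big_split.
by apply: eq_bigr => v _; rewrite scalerDr.
Qed.

End Sums.

Section TStruct.
Variables (k : comPzRingType) (V : lmodType k).
Implicit Type W : lmodType k.
Notation pi := (\pi_(Tplus V)).
Notation TP := (Tplus V).

Lemma precV_lin_r (a : TP) : klinear (precV a).
Proof.
move=> c x y; elim/quotW: a => e1; elim/quotW: x => e2; elim/quotW: y => e3.
rewrite -(piZ c e2) -piD !precV_pi -piZ -piD; apply: pi_eq_all => W f.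
by rewrite fsum_eval_cat fsum_eval_scale !evalB Bs_cat_r Bs_scale_r.
Qed.

Lemma precV_lin_l (b : TP) : klinear (fun a => precV a b).
Proof.
move=> c x y; elim/quotW: b => e1; elim/quotW: x => e2; elim/quotW: y => e3.
rewrite -(piZ c e2) -piD !precV_pi -piZ -piD; apply: pi_eq_all => W f.
by rewrite fsum_eval_cat fsum_eval_scale !evalB Bs_cat_l Bs_scale_l.
Qed.

Lemma succV_lin_r (a : TP) : klinear (succV a).
Proof.
move=> c x y; elim/quotW: a => e1; elim/quotW: x => e2; elim/quotW: y => e3.
rewrite -(piZ c e2) -piD !succV_pi -piZ -piD; apply: pi_eq_all => W f.
by rewrite fsum_eval_cat fsum_eval_scale !evalB Bs_cat_r Bs_scale_r.
Qed.

Lemma succV_lin_l (b : TP) : klinear (fun a => succV a b).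
Proof.
move=> c x y; elim/quotW: b => e1; elim/quotW: x => e2; elim/quotW: y => e3.
rewrite -(piZ c e2) -piD !succV_pi -piZ -piD; apply: pi_eq_all => W f.
by rewrite fsum_eval_cat fsum_eval_scale !evalB Bs_cat_l Bs_scale_l.
Qed.

Lemma TV_ax1 (x y z : TP) : precV (precV x y) z = precV x (precV y z + succV y z).
Proof.
elim/quotW: x => e1; elim/quotW: y => e2; elim/quotW: z => e3.
rewrite (precV_pi e1 e2) (precV_pi _ e3) (precV_pi e2 e3) (succV_pi e2 e3) -piD.
rewrite (precV_pi e1); apply: pi_eq_all => W f.
rewrite !evalB Bs_fbilin_l Bs_cat_r !Bs_fbilin_r Ts_add.
apply: Ts_ext => x y z; exact: ax1w.
Qed.

Lemma TV_ax2 (x y z : TP) : precV (succV x y) z = succV x (precV y z).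
Proof.
elim/quotW: x => e1; elim/quotW: y => e2; elim/quotW: z => e3.
rewrite (succV_pi e1 e2) (precV_pi _ e3) (precV_pi e2 e3) (succV_pi e1).
apply: pi_eq_all => W f.
rewrite !evalB Bs_fbilin_l Bs_fbilin_r.
apply: Ts_ext => x y z; exact: ax2w.
Qed.

Lemma TV_ax3 (x y z : TP) : succV (precV x y + succV x y) z = succV x (succV y z).
Proof.
elim/quotW: x => e1; elim/quotW: y => e2; elim/quotW: z => e3.
rewrite (precV_pi e1 e2) (succV_pi e1 e2) -piD (succV_pi _ e3) (succV_pi e2 e3).
rewrite (succV_pi e1); apply: pi_eq_all => W f.
rewrite !evalB Bs_cat_l !Bs_fbilin_l Bs_fbilin_r Ts_add.
apply: Ts_ext => x y z; exact: ax3w.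
Qed.

Lemma TV_comm (x y : TP) : succV x y = precV y x.
Proof.
elim/quotW: x => e1; elim/quotW: y => e2.
rewrite precV_pi succV_pi; apply: pi_eq_all => W f.
rewrite !evalB Bs_swap; apply: Bs_ext => s t; exact: SL_succ.
Qed.

Variables (lambda : k) (d0 : V -> V).
Hypothesis Hd0 : linear d0.

Lemma dV_lin : klinear (dV lambda d0).
Proof.
move=> c x y; elim/quotW: x => e1; elim/quotW: y => e2.
rewrite -(piZ c e1) -piD !dV_pi // -piZ -piD; apply: pi_eq_all => W f.
by rewrite !eval_fdiff !fsum_eval_cat !fsum_eval_scale !eval_fdiff.
Qed.

Lemma dV_prec (x y : TP) :
  dV lambda d0 (precV x y) = precV (dV lambda d0 x) y + precV x (dV lambda d0 y)
    + lambda *: precV (dV lambda d0 x) (dV lambda d0 y).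
Proof.
elim/quotW: x => e1; elim/quotW: y => e2.
rewrite (precV_pi e1 e2) !dV_pi // (precV_pi _ e2) (precV_pi e1) (precV_pi (fdiff _ _ _)).
rewrite -piZ -!piD; apply: pi_eq_all => W f.
rewrite eval_fdiff !fsum_eval_cat fsum_eval_scale !evalB.
rewrite Bs_fdiff_l Bs_fdiff_r Bs_fdiff_l Bs_fdiff_r Bs_Z !Bs_add.
apply: Bs_ext => s t.
have := Pst_all lambda d0 f s t; rewrite /Pst => ->.
by rewrite DW_swap.
Qed.

Lemma dV_succ (x y : TP) :
  dV lambda d0 (succV x y) = succV (dV lambda d0 x) y + succV x (dV lambda d0 y)
    + lambda *: succV (dV lambda d0 x) (dV lambda d0 y).
Proof.
rewrite !TV_comm dV_prec; congr (_ + _); exact: addrC.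
Qed.

End TStruct.

Lemma klin0 (k : comPzRingType) (W1 W2 : lmodType k) (g : W1 -> W2) :
  klinear g -> g 0 = 0.
Proof.
move=> H; have := H 1 0 0; rewrite !scale1r addr0 => E.
by apply: (@addrI _ (g 0)); rewrite -E addr0.
Qed.

Lemma klinD (k : comPzRingType) (W1 W2 : lmodType k) (g : W1 -> W2) x y :
  klinear g -> g (x + y) = g x + g y.
Proof. by move=> H; have := H 1 x y; rewrite !scale1r. Qed.

Lemma klin_fsum (k : comPzRingType) (V : lmodType k) (W1 W2 : lmodType k)
  (g : W1 -> W2) (F : seq V -> W1) (e : fsum V) :
  klinear g -> g (fsum_eval F e) = fsum_eval (fun w => g (F w)) e.
Proof.
move=> H; rewrite /fsum_eval; elim: e => [|t e IH]; first by rewrite !big_nil klin0.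
by rewrite !big_cons H IH.
Qed.

Lemma klin_SL (k : comPzRingType) (V : lmodType k) (W1 W2 : lmodType k)
  (g : W1 -> W2) (F : seq V -> W1) L :
  klinear g -> g (SL F L) = SL (fun w => g (F w)) L.
Proof.
move=> H; rewrite /SL; elim: L => [|t L IH]; first by rewrite !big_nil klin0.
by rewrite !big_cons -IH klinD.
Qed.

Section Univ.
Variables (k : comPzRingType) (V : lmodType k) (lambda : k) (d0 : V -> V).
Hypothesis Hd0 : linear d0.
Variables (D : lmodType k) (precD succD : D -> D -> D) (dD : D -> D).
Hypothesis HprecR : forall a, klinear (precD a).
Hypothesis HprecL : forall b, klinear (fun a => precD a b).
Hypothesis Hax1 : forall a b c, precD (precD a b) c = precD a (precD b c + succD b c).
Hypothesis Hcomm : forall a b, succD a b = precD b a.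
Hypothesis HdL : klinear dD.
Hypothesis Hdp : forall a b, dD (precD a b) =
  precD (dD a) b + precD a (dD b) + lambda *: precD (dD a) (dD b).
Variables (psi : V -> D).
Hypothesis Hpsi : klinear psi.
Hypothesis Hcomp : forall v, dD (psi v) = psi (d0 v).
Notation pi := (\pi_(Tplus V)).

Lemma precD0l b : precD 0 b = 0.
Proof. exact: (klin0 (HprecL b)). Qed.

Lemma precD0r a : precD a 0 = 0.
Proof. exact: (klin0 (HprecR a)). Qed.

Fixpoint phiw (w : seq V) : D :=
  match w with
  | [::] => 0
  | a :: w' => if w' is [::] then psi a else precD (psi a) (phiw w')
  end.

Lemma phiw_cons a w : w != [::] -> phiw (a :: w) = precD (psi a) (phiw w).
Proof. by case: w. Qed.

Lemma phiw_multilin : multilin phiw.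
Proof.
split => // u; elim: u => [|y u IH] v r a b.
- case: v => [|c v] /=; first exact: Hpsi.
  by rewrite Hpsi HprecL.
- rewrite !cat_cons !phiw_cons.
  1: by rewrite IH HprecR.
  all: by clear IH; case: u.
Qed.

Definition psibar (x : Tplus V) : D := fsum_eval phiw (repr x).

Lemma psibar_pi e : psibar (pi e) = fsum_eval phiw e.
Proof. exact: (fsum_eval_repr e phiw_multilin). Qed.

Lemma phiw_prec s t : SL phiw (word_prec s t) = precD (phiw s) (phiw t).
Proof.
have [n Hn] : exists n, (size s + size t <= n)%N by exists (size s + size t).
elim: n s t Hn => [|n IH] s t Hn.
  case: s Hn => [|a s] Hn; last by move: Hn => /=; lia.
  by rewrite SL_prec_nil_l /= precD0l.
case: t Hn => [|b t] Hn; first by rewrite SL_prec_nil_r /= precD0r.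
case: s Hn => [|a s] Hn; first by rewrite SL_prec_nil_l /= precD0l.
rewrite SL_prec //.
rewrite (SL_sh_eq (h := fun w => precD (psi a) (phiw w))); last first.
  by move=> w Hw; rewrite phiw_cons //; apply/eqP => H0; move: Hw; rewrite H0 /=; lia.
rewrite -klin_SL //.
case: s Hn => [|c s] Hn; first by rewrite SL1.
rewrite SL_sh_split // !IH; try by move: Hn => /=; lia.
by rewrite -[precD (phiw (b :: t)) _]Hcomm -Hax1 -phiw_cons.
Qed.

Lemma psibar_lin : klinear psibar.
Proof.
move=> c x y; elim/quotW: x => e1; elim/quotW: y => e2.
by rewrite -piZ -piD !psibar_pi fsum_eval_cat fsum_eval_scale.
Qed.

Lemma psibar_prec x y : psibar (precV x y) = precD (psibar x) (psibar y).
Proof.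
elim/quotW: x => e1; elim/quotW: y => e2.
rewrite precV_pi !psibar_pi evalB.
rewrite (klin_fsum _ _ (HprecL _)) /fsum_eval /Bs; apply: eq_bigr => t _.
rewrite -/(fsum_eval phiw e2) (klin_fsum _ _ (HprecR _)) /fsum_eval scaler_sumr.
by apply: eq_bigr => u _; rewrite phiw_prec scalerA.
Qed.

Lemma psibar_succ x y : psibar (succV x y) = succD (psibar x) (psibar y).
Proof. by rewrite TV_comm psibar_prec Hcomm. Qed.

Lemma phiw_d w : dD (phiw w) = DW lambda d0 phiw w.
Proof.
elim: w => [|a w IH]; first by rewrite DW_nil /= klin0.
rewrite DW_cons.
case: w IH => [|b w] IH.
  by rewrite !DW_nil scaler0 !addr0 /= Hcomp.
rewrite phiw_cons // Hdp IH Hcomp -phiw_cons //.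
rewrite (DW_size lambda d0 (f := fun x => phiw (a :: x)) (g := fun x => precD (psi a) (phiw x))); last first.
  by move=> x Hx; rewrite phiw_cons //; apply/eqP => H0; move: Hx; rewrite H0.
rewrite (DW_size lambda d0 (f := fun x => phiw (d0 a :: x)) (g := fun x => precD (psi (d0 a)) (phiw x))); last first.
  by move=> x Hx; rewrite phiw_cons //; apply/eqP => H0; move: Hx; rewrite H0.
by rewrite /DW -!klin_fsum.
Qed.

Lemma psibar_d x : dD (psibar x) = psibar (dV lambda d0 x).
Proof.
elim/quotW: x => e; rewrite dV_pi // !psibar_pi eval_fdiff klin_fsum //.
by rewrite /fsum_eval; apply: eq_bigr => t _; rewrite phiw_d.
Qed.

Lemma psibar_j v : psibar (jV v) = psi v.
Proof. by rewrite /jV psibar_pi /fsum_eval big_seq1 scale1r. Qed.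

Lemma pi_cons (t : k * seq V) e : pi (t :: e) = t.1 *: pi [:: (1, t.2)] + pi e.
Proof.
rewrite -piZ -piD; congr pi; case: t => c w /=.
by rewrite mulr1.
Qed.

Lemma uniq_psibar (g : Tplus V -> D) :
  klinear g -> (forall a b, g (precV a b) = precD (g a) (g b)) ->
  (forall v, g (jV v) = psi v) -> forall x, g x = psibar x.
Proof.
move=> Hg Hgp Hgj x; elim/quotW: x => e; rewrite psibar_pi.
have Hw : forall w, g (pi [:: (1, w)]) = phiw w.
  elim=> [|a w IH].
    have -> : pi [:: (1, [::])] = 0 :> Tplus V.
      apply: pi_eq => W f [Hf0 _]; by rewrite /fsum_eval big_seq1 big_nil Hf0 scaler0.
    exact: klin0.
  case: w IH => [|b w] IH; first exact: Hgj.
  have -> : pi [:: (1, [:: a, b & w])] = precV (jV a) (pi [:: (1, b :: w)]).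
    rewrite /jV precV_pi; apply: pi_eq_all => W f.
    rewrite evalB /Bs !big_seq1 /fsum_eval big_seq1 /= mulr1.
    by rewrite SL1.
  by rewrite Hgp Hgj IH.
elim: e => [|t e IH]; first by rewrite pi0 klin0 // /fsum_eval big_nil.
by rewrite pi_cons Hg Hw IH /fsum_eval big_cons.
Qed.

End Univ.

End Helpers.
Import Helpers.
Unset Implicit Arguments.

Local Open Scope ring_scope.

Theorem corollary4p5 (k : comPzRingType) (lambda : k) (V : lmodType k) (d0 : V -> V) :
  klinear d0 ->
  comm_diff_dendriform lambda (@precV k V) (@succV k V) (dV lambda d0)
  /\
  (forall (D : lmodType k) (precD succD : D -> D -> D) (dD : D -> D),
     comm_diff_dendriform lambda precD succD dD ->
     forall psi : V -> D, klinear psi ->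
     (forall v, dD (psi v) = psi (d0 v)) ->
     exists! psibar : Tplus V -> D,
       [/\ klinear psibar,
           (forall a b, psibar (precV a b) = precD (psibar a) (psibar b)),
           (forall a b, psibar (succV a b) = succD (psibar a) (psibar b)),
           (forall a, dD (psibar a) = psibar (dV lambda d0 a)) &
           (forall v, psibar (jV v) = psi v)]).
Proof.
move=> Hd0; split.
  split; first split.
  - split.
    + by split; [exact: precV_lin_r | exact: precV_lin_l].
    + by split; [exact: succV_lin_r | exact: succV_lin_l].
    + exact: TV_ax1.
    + exact: TV_ax2.
    + exact: TV_ax3.
  - exact: TV_comm.
  - split; [exact: dV_lin | exact: dV_prec | exact: dV_succ].
move=> D precD succD dD [[[[HpR HpL] _ Ha1 _ _] Hc] [HdL Hdp _]] psi Hpsi Hcomp.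
exists (psibar precD psi); split.
  split.
  - exact: psibar_lin.
  - exact: psibar_prec.
  - exact: psibar_succ.
  - exact: psibar_d.
  - exact: psibar_j.
move=> g [Hg1 Hg2 _ _ Hg5]; apply: functional_extensionality => x.
by symmetry; apply: uniq_psibar.
Qed.
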